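(* For all $\theta\in\mathbb R$ and $\ell>0$ the function $a\mapsto R(\theta,a,\ell)$ is strictly decreasing on $(0,\infty)$. Moreover, for any $C_0\ge1$ there is a constant $C=C(C_0)\ge1$ such that for all $(\theta,a,\ell)\in\mathbb R\times(0,\infty)^2$ $$\max_{\alpha\in[a/C_0,C_0a]}|\partial_aR(\theta,\alpha,\ell)|\le C\min_{\alpha\in[a/C_0,C_0a]}|\partial_aR(\theta,\alpha,\ell)|.$$
   Context: Fix $m>0$. For $a,\ell>0$: $\kappa(a,\ell)=(1+4a^2\ell/m^2)^{-1/2}$, $p(a,\ell)=\frac{m}{2a^2\kappa(a,\ell)}$. For $\kappa\in(0,1)$, $G_\kappa(x)=\sqrt{x^2-1}-\kappa\ln(x+\sqrt{x^2-1})$ on $[1,\infty)$ and $H_\kappa=G_\kappa^{-1}:[0,\infty)\to[1,\infty)$. $R(\theta,a,\ell)=p(a,\ell)H_{\kappa(a,\ell)}(|\theta|/p(a,\ell))-p(a,\ell)\kappa(a,\ell)$, a smooth function on $\mathbb R\times(0,\infty)^2$. *)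

(* Defs.v *)
From Stdlib Require Import Reals Lra ClassicalEpsilon.
From Coquelicot Require Import Coquelicot.
Open Scope R_scope.

Definition kappa (m a l : R) : R := / sqrt (1 + 4 * a ^ 2 * l / m ^ 2).

Definition pp (m a l : R) : R := m / (2 * a ^ 2 * kappa m a l).

Definition G (k x : R) : R := sqrt (x ^ 2 - 1) - k * ln (x + sqrt (x ^ 2 - 1)).

(* H_k = G_k^{-1} : [0,oo) -> [1,oo): the (unique, for 0<k<1) x >= 1 with G_k x = y *)
Definition H (k y : R) : R :=
  epsilon (inhabits 1) (fun x => 1 <= x /\ G k x = y).

Definition Rfun (m theta a l : R) : R :=
  pp m a l * H (kappa m a l) (Rabs theta / pp m a l) - pp m a l * kappa m a l.

(* Main.v *)
Require Import Defs.
From Stdlib Require Import Reals Lra Psatz ClassicalEpsilon.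
From Coquelicot Require Import Coquelicot.
Open Scope R_scope.

Lemma is_derive_sinh x : is_derive sinh x (cosh x).
Proof. apply is_derive_Reals, derivable_pt_lim_sinh. Qed.
Lemma is_derive_cosh x : is_derive cosh x (sinh x).
Proof. apply is_derive_Reals, derivable_pt_lim_cosh. Qed.

Lemma mono_ge (f df : R -> R) (a : R) :
  (forall x, a <= x -> is_derive f x (df x)) -> (forall x, a <= x -> 0 <= df x) ->
  forall x y, a <= x -> x <= y -> f x <= f y.
Proof.
  intros Hd Hp x y Hx Hxy.
  destruct (MVT_gen f x y df) as [c [Hc Heq]].
  - intros z Hz. apply Hd. rewrite Rmin_left in Hz; lra.
  - intros z Hz. apply derivable_continuous_pt. exists (df z). apply is_derive_Reals, Hd. rewrite Rmin_left in Hz; lra.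
  - rewrite Rmin_left in Hc by lra. rewrite Rmax_right in Hc by lra.
    assert (0 <= df c * (y - x)) by (apply Rmult_le_pos; [apply Hp; lra| lra]). lra.
Qed.

Lemma mono_gt (f df : R -> R) (a : R) :
  (forall x, a <= x -> is_derive f x (df x)) -> (forall x, a <= x -> 0 < df x) ->
  forall x y, a <= x -> x < y -> f x < f y.
Proof.
  intros Hd Hp x y Hx Hxy.
  destruct (MVT_gen f x y df) as [c [Hc Heq]].
  - intros z Hz. apply Hd. rewrite Rmin_left in Hz; lra.
  - intros z Hz. apply derivable_continuous_pt. exists (df z). apply is_derive_Reals, Hd. rewrite Rmin_left in Hz; lra.
  - rewrite Rmin_left in Hc by lra. rewrite Rmax_right in Hc by lra.
    assert (0 < df c * (y - x)) by (apply Rmult_lt_0_compat; [apply Hp; lra| lra]). lra.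
Qed.

Lemma exp_pos' x : 0 < exp x. Proof. apply exp_pos. Qed.

Lemma cosh_sinh_sq x : cosh x * cosh x - sinh x * sinh x = 1.
Proof. unfold cosh, sinh. rewrite exp_Ropp. assert (exp x <> 0) by (apply Rgt_not_eq, exp_pos). field. auto. Qed.

Lemma cosh_plus_sinh x : cosh x + sinh x = exp x.
Proof. unfold cosh, sinh. field. Qed.

Lemma cosh_minus_sinh x : cosh x - sinh x = exp (- x).
Proof. unfold cosh, sinh. field. Qed.

Lemma cosh_ge1 x : 1 <= cosh x.
Proof. unfold cosh. rewrite exp_Ropp. set (E := exp x). assert (0 < E) by apply exp_pos.
  assert (E + / E >= 2). { assert ((E - 1)^2 >= 0) by (apply Rle_ge, pow2_ge_0).
  assert (E + /E - 2 = (E-1)^2 / E) by (field; lra). 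
  assert ((E-1)^2/E >= 0). { apply Rle_ge. apply Rdiv_le_0_compat; nra. } lra. } lra.
Qed.


Lemma sinh0 : sinh 0 = 0. Proof. unfold sinh; rewrite Ropp_0; lra. Qed.
Lemma cosh0 : cosh 0 = 1. Proof. unfold cosh; rewrite Ropp_0, exp_0; lra. Qed.

Ltac hd := unfold sinh, cosh; auto_derive; try easy; field.

Lemma sinh_ge_id x : 0 <= x -> x <= sinh x.
Proof.
  intros Hx. assert (H := mono_ge (fun t => sinh t - t) (fun t => cosh t - 1) 0).
  assert (sinh 0 - 0 <= sinh x - x); [|rewrite sinh0 in *; lra].
  apply H; try lra. intros; hd. intros; generalize (cosh_ge1 x0); lra.
Qed.

Lemma sinh_nonneg x : 0 <= x -> 0 <= sinh x.
Proof. intros; generalize (sinh_ge_id x); lra. Qed.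

Lemma cosh_m1_le_sinh x : 0 <= x -> cosh x - 1 <= sinh x.
Proof. intros. generalize (cosh_minus_sinh x). assert (exp (-x) <= 1).
  { rewrite <- exp_0. destruct (Req_dec x 0). subst; rewrite Ropp_0; lra. left; apply exp_increasing; lra. }
  lra. Qed.

Lemma cosh_m1_ge x : 0 <= x -> x^2/2 <= cosh x - 1.
Proof.
  intros Hx. assert (H := mono_ge (fun t => cosh t - 1 - t^2/2) (fun t => sinh t - t) 0).
  assert (cosh 0 - 1 - 0^2/2 <= cosh x - 1 - x^2/2); [|rewrite cosh0 in *; lra].
  apply H; try lra. intros; hd. intros; generalize (sinh_ge_id x0); lra.
Qed.

Lemma sinh_ge_cubic x : 0 <= x -> x + x^3/6 <= sinh x.
Proof.
  intros Hx. assert (H := mono_ge (fun t => sinh t - t - t^3/6) (fun t => cosh t - 1 - t^2/2) 0).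
  assert (sinh 0 - 0 - 0^3/6 <= sinh x - x - x^3/6); [|rewrite sinh0 in *; lra].
  apply H; try lra. intros; hd. intros; generalize (cosh_m1_ge x0); lra.
Qed.

Lemma xcosh_ge_sinh x : 0 <= x -> sinh x <= x * cosh x.
Proof.
  intros Hx. assert (H := mono_ge (fun t => t * cosh t - sinh t) (fun t => t * sinh t) 0).
  assert (0 * cosh 0 - sinh 0 <= x * cosh x - sinh x); [|rewrite sinh0 in *; lra].
  apply H; try lra. intros; hd. intros; generalize (sinh_nonneg x0); nra.
Qed.

Lemma cosh_m1_le x : 0 <= x -> cosh x - 1 <= x^2/2 * cosh x.
Proof.
  intros Hx. assert (H := mono_ge (fun t => t^2/2 * cosh t - cosh t + 1)
     (fun t => (t * cosh t - sinh t) + t^2/2 * sinh t) 0).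
  assert (0^2/2 * cosh 0 - cosh 0 + 1 <= x^2/2 * cosh x - cosh x + 1); [|rewrite cosh0 in *; lra].
  apply H; try lra. intros; hd. intros; generalize (sinh_nonneg x0) (xcosh_ge_sinh x0); nra.
Qed.

Definition hh (x : R) := x * sinh x - 2 * cosh x + 2.

Lemma hh_ge x : 0 <= x -> x^4/12 <= hh x.
Proof.
  intros Hx.
  assert (G : forall y, 0 <= y -> 0 <= y * cosh y - sinh y - y^3/3).
  { intros y Hy. assert (H := mono_ge (fun t => t * cosh t - sinh t - t^3/3) (fun t => t * (sinh t - t)) 0).
    assert (0 * cosh 0 - sinh 0 - 0^3/3 <= y * cosh y - sinh y - y^3/3); [|rewrite sinh0 in *; lra].
    apply H; try lra. intros; hd. intros; generalize (sinh_ge_id x0); nra. }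
  assert (H := mono_ge (fun t => hh t - t^4/12) (fun t => t * cosh t - sinh t - t^3/3) 0).
  assert (hh 0 - 0^4/12 <= hh x - x^4/12); [|unfold hh in *; rewrite sinh0, cosh0 in *; lra].
  apply H; try lra. intros; unfold hh; hd. intros; apply G; lra.
Qed.

Lemma hh_le x : 0 <= x -> hh x <= x^4/12 * cosh x.
Proof.
  intros Hx.
  assert (G : forall y, 0 <= y -> 0 <= y^3/3 * cosh y - y * cosh y + sinh y).
  { intros y Hy. assert (H := mono_ge (fun t => t^3/3 * cosh t - t * cosh t + sinh t)
       (fun t => t * (t * cosh t - sinh t) + t^3/3 * sinh t) 0).
    assert (0^3/3 * cosh 0 - 0 * cosh 0 + sinh 0 <= y^3/3 * cosh y - y * cosh y + sinh y); [|rewrite sinh0 in *; lra].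
    apply H; try lra. intros; hd. intros; generalize (xcosh_ge_sinh x0) (sinh_nonneg x0); intros.
    assert (0 <= x0 * (x0 * cosh x0 - sinh x0)) by (apply Rmult_le_pos; lra).
    assert (0 <= x0^3/3 * sinh x0) by (apply Rmult_le_pos; [|lra]; apply Rmult_le_pos; [apply pow_le|]; lra). lra. }
  assert (H := mono_ge (fun t => t^4/12 * cosh t - hh t)
      (fun t => (t^3/3 * cosh t - t * cosh t + sinh t) + t^4/12 * sinh t) 0).
  assert (0^4/12 * cosh 0 - hh 0 <= x^4/12 * cosh x - hh x); [|unfold hh in *; rewrite sinh0, cosh0 in *; lra].
  apply H; try lra. intros; unfold hh; hd. intros. generalize (G x0 H0). intros.
  assert (0 <= x0^4/12 * sinh x0) by (apply Rmult_le_pos; [|apply sinh_nonneg; lra]; apply Rmult_le_pos; [apply pow_le|]; lra). lra.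
Qed.

Lemma hh_mono x y : 0 <= x -> x <= y -> hh x <= hh y.
Proof.
  intros. apply (mono_ge hh (fun t => t * cosh t - sinh t) 0); auto.
  intros; unfold hh; hd. intros; generalize (xcosh_ge_sinh x0); lra.
Qed.

Lemma cosh_mono x y : 0 <= x -> x <= y -> cosh x <= cosh y.
Proof.
  intros. apply (mono_ge cosh sinh 0); auto. intros; apply is_derive_cosh.
  intros; apply sinh_nonneg; auto.
Qed.

Lemma sinh_lip x y : x <= y -> y - x <= sinh y - sinh x.
Proof.
  intros. assert (sinh x - x <= sinh y - y); [|lra].
  apply (mono_ge (fun t => sinh t - t) (fun t => cosh t - 1) x); auto; try lra.
  intros; hd. intros; generalize (cosh_ge1 x0); lra.
Qed.

Lemma sinh_scale K x : 1 <= K -> 0 <= x -> K * sinh x <= sinh (K * x).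
Proof.
  intros HK Hx. assert (sinh (1 * x) - 1 * sinh x <= sinh (K * x) - K * sinh x); [|rewrite Rmult_1_l in *; lra].
  apply (mono_ge (fun k => sinh (k * x) - k * sinh x) (fun k => x * cosh (k * x) - sinh x) 1); auto; try lra.
  intros; hd. intros k Hk. generalize (cosh_mono x (k * x) Hx ltac:(nra)) (xcosh_ge_sinh x Hx). nra.
Qed.

Definition Pf (c b : R) := sqrt (b * b + c * b).
Definition Ub (c T b : R) := epsilon (inhabits 0) (fun u => 0 <= u /\ Pf c b * sinh u - b * u = T).
Definition Rb (c T b : R) := Pf c b * cosh (Ub c T b) - b.

Lemma Pf_facts c b : 0 < c -> 0 < b -> 0 < Pf c b /\ Pf c b * Pf c b = b * b + c * b /\ b < Pf c b.
Proof.
  intros Hc Hb. unfold Pf. assert (0 < b * b + c * b) by nra.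
  assert (E := sqrt_sqrt _ (Rlt_le _ _ H)). assert (P := sqrt_lt_R0 _ H).
  split; auto. split; auto. nra.
Qed.

Lemma g_strict P b u v : 0 <= b -> b < P -> u < v -> P * sinh u - b * u < P * sinh v - b * v.
Proof. intros. generalize (sinh_lip u v ltac:(lra)). nra. Qed.

Lemma g_inj P b u v : 0 <= b -> b < P -> P * sinh u - b * u = P * sinh v - b * v -> u = v.
Proof.
  intros. destruct (Rtotal_order u v) as [H2|[H2|H2]]; auto.
  generalize (g_strict P b u v H H0 H2); lra.
  generalize (g_strict P b v u H H0 H2); lra.
Qed.

Lemma g_exists P b T : 0 <= b -> b < P -> 0 <= T -> exists u, 0 <= u /\ P * sinh u - b * u = T.
Proof.
  intros Hb HP HT. set (M := T / (P - b)).
  assert (HM : 0 <= M) by (unfold M; apply Rdiv_le_0_compat; lra).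
  assert (HMT : T <= P * sinh M - b * M).
  { generalize (sinh_ge_id M HM); intros. assert (T = (P - b) * M) by (unfold M; field; lra). nra. }
  destruct (IVT_gen (fun u => P * sinh u - b * u) 0 M T) as [x [Hx Hfx]].
  - intros x. apply derivable_continuous_pt. exists (P * cosh x - b). apply is_derive_Reals. hd.
  - rewrite sinh0. rewrite Rmin_left, Rmax_right; lra.
  - exists x. rewrite Rmin_left in Hx by lra. split; [lra| auto].
Qed.

Lemma Ub_spec c T b : 0 < c -> 0 < b -> 0 <= T -> 0 <= Ub c T b /\ Pf c b * sinh (Ub c T b) - b * Ub c T b = T.
Proof.
  intros Hc Hb HT. destruct (Pf_facts c b Hc Hb) as [H1 [H2 H3]].
  unfold Ub. apply epsilon_spec. apply g_exists; lra.
Qed.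

Lemma H_char k u : 0 < k < 1 -> 0 <= u -> H k (sinh u - k * u) = cosh u.
Proof.
  intros Hk Hu. unfold H.
  assert (Hsq : forall v, 0 <= v -> sqrt (cosh v ^ 2 - 1) = sinh v).
  { intros v Hv. replace (cosh v ^ 2 - 1) with (sinh v ^ 2) by (generalize (cosh_sinh_sq v); intros; nra).
    apply sqrt_pow2, sinh_nonneg; auto. }
  destruct (epsilon_spec (inhabits 1) (fun x => 1 <= x /\ G k x = sinh u - k * u)) as [Hx HG].
  { exists (cosh u). split. apply cosh_ge1. unfold G. rewrite Hsq by auto.
    rewrite (Rplus_comm (cosh u)), Rplus_comm, cosh_plus_sinh, ln_exp. ring. }
  set (x := epsilon _ _) in *.
  unfold G in HG. set (s := sqrt (x ^ 2 - 1)) in *.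
  assert (Hs0 : 0 <= s) by apply sqrt_pos.
  assert (Hs2 : s * s = x ^ 2 - 1) by (apply sqrt_sqrt; nra).
  set (v := ln (x + s)) in *.
  assert (Hev : exp v = x + s) by (apply exp_ln; lra).
  assert (Hv : 0 <= v). { destruct (Rle_or_lt 0 v); auto. assert (exp v < exp 0) by (apply exp_increasing; auto). rewrite exp_0 in H0. lra. }
  assert (Hemv : exp (- v) = x - s). { rewrite exp_Ropp, Hev. field_simplify_eq. nra. nra. }
  assert (Hch : cosh v = x) by (unfold cosh; rewrite Hev, Hemv; field).
  assert (Hsh : sinh v = s) by (unfold sinh; rewrite Hev, Hemv; field).
  rewrite <- Hsh in HG. rewrite <- Hch.
  f_equal. apply (g_inj 1 k); try lra.
Qed.

Lemma Rfun_eq m theta a l : 0 < m -> 0 < a -> 0 < l ->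
  Rfun m theta a l = Rb (2 * l / m) (Rabs theta) (m / (2 * a ^ 2)).
Proof.
  intros Hm Ha Hl. set (b := m / (2 * a ^ 2)). set (c := 2 * l / m).
  assert (Hb : 0 < b) by (unfold b; apply Rdiv_lt_0_compat; [lra| apply Rmult_lt_0_compat; [lra|apply pow_lt; lra]]).
  assert (Hc : 0 < c) by (unfold c; apply Rdiv_lt_0_compat; lra).
  set (S := 1 + 4 * a ^ 2 * l / m ^ 2).
  assert (HS : 0 < S) by (unfold S; assert (0 < 4 * a ^ 2 * l / m ^ 2) by (apply Rdiv_lt_0_compat; [apply Rmult_lt_0_compat; [|lra]; apply Rmult_lt_0_compat; [lra|apply pow_lt; lra] | apply pow_lt; lra]); lra).
  assert (HsS := sqrt_lt_R0 _ HS).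
  assert (Hpp : pp m a l = Pf c b).
  { unfold pp, kappa, Pf. fold S. replace (b * b + c * b) with (b * b * S).
    rewrite sqrt_mult, sqrt_square by nra. unfold b. field. split; lra.
    unfold S, b, c. field. split; lra. }
  assert (Hk : kappa m a l = b / Pf c b).
  { rewrite <- Hpp. unfold pp, b. field. split. unfold kappa. apply Rgt_not_eq, Rinv_0_lt_compat; auto. lra. }
  destruct (Pf_facts c b Hc Hb) as [HP1 [HP2 HP3]].
  destruct (Ub_spec c (Rabs theta) b Hc Hb (Rabs_pos theta)) as [HU1 HU2].
  unfold Rfun, Rb. rewrite Hpp, Hk.
  replace (Rabs theta / Pf c b) with (sinh (Ub c (Rabs theta) b) - b / Pf c b * Ub c (Rabs theta) b).
  rewrite H_char; auto. field; lra.
  split. apply Rdiv_lt_0_compat; lra. apply (Rmult_lt_reg_r (Pf c b)); auto. field_simplify; lra.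
  set (U := Ub c (Rabs theta) b) in *. set (T := Rabs theta) in *. rewrite <- HU2. field. lra.
Qed.
Lemma is_lim_eps (f : R -> R) (x l : R) : is_lim f x l -> forall eps, 0 < eps -> exists d, 0 < d /\
  forall y, y <> x -> Rabs (y - x) < d -> Rabs (f y - l) < eps.
Proof.
  intros H eps He. apply is_lim_spec in H. unfold is_lim' in H. destruct (H (mkposreal eps He)) as [d Hd].
  exists d. split. apply cond_pos. intros y Hy1 Hy2. apply Hd; auto.
Qed.

Lemma eps_is_lim (f : R -> R) (x l : R) : (forall eps, 0 < eps -> exists d, 0 < d /\
  forall y, y <> x -> Rabs (y - x) < d -> Rabs (f y - l) < eps) -> is_lim f x l.
Proof.
  intros H. apply is_lim_spec. unfold is_lim'. intros eps. destruct (H eps (cond_pos eps)) as [d [Hd H1]].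
  exists (mkposreal d Hd). intros y Hy Hne. apply H1; auto.
Qed.

Lemma implicit_deriv (U A B : R -> R) (b0 la lb d0 : R) :
  0 < d0 -> (forall b, b <> b0 -> Rabs (b - b0) < d0 -> (U b - U b0) * B b = (b - b0) * A b) ->
  is_lim A b0 la -> is_lim B b0 lb -> lb <> 0 -> is_derive U b0 (la / lb).
Proof.
  intros Hd0 Hid HA HB Hlb.
  assert (HAB : is_lim (fun b => A b / B b) b0 (la / lb)).
  { apply (is_lim_div A B b0 la lb HA HB). intro E; injection E; auto. simpl; auto. }
  assert (HBl := is_lim_eps B b0 lb HB (Rabs lb / 2) ltac:(apply Rdiv_lt_0_compat; [apply Rabs_pos_lt; auto| lra])).
  destruct HBl as [d1 [Hd1 HB1]].
  apply is_derive_Reals. intros eps Heps.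
  destruct (is_lim_eps _ _ _ HAB eps Heps) as [d2 [Hd2 H2]].
  assert (Hd : 0 < Rmin d0 (Rmin d1 d2)) by (repeat apply Rmin_glb_lt; auto).
  exists (mkposreal _ Hd). intros h Hh Hhd. simpl in Hhd.
  assert (Hh0 : Rabs (b0 + h - b0) < d0) by (replace (b0 + h - b0) with h by ring; apply Rlt_le_trans with (1 := Hhd); apply Rmin_l).
  assert (Hh1 : Rabs (b0 + h - b0) < d1) by (replace (b0 + h - b0) with h by ring; apply Rlt_le_trans with (1 := Hhd); eapply Rle_trans; [apply Rmin_r| apply Rmin_l]).
  assert (Hh2 : Rabs (b0 + h - b0) < d2) by (replace (b0 + h - b0) with h by ring; apply Rlt_le_trans with (1 := Hhd); eapply Rle_trans; [apply Rmin_r| apply Rmin_r]).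
  assert (Hne : b0 + h <> b0) by (intro E; apply Hh; lra).
  specialize (HB1 _ Hne Hh1). specialize (H2 _ Hne Hh2). specialize (Hid _ Hne Hh0).
  assert (HBn : B (b0 + h) <> 0).
  { intro E. rewrite E in HB1. rewrite Rminus_0_l, Rabs_Ropp in HB1. generalize (Rabs_pos_lt lb Hlb). lra. }
  replace ((U (b0 + h) - U b0) / h) with (A (b0 + h) / B (b0 + h)); auto.
  replace (b0 + h - b0) with h in Hid by ring.
  field_simplify_eq; auto. rewrite Rmult_comm, <- Hid. ring.
Qed.

Definition qf (u0 u : R) : R := if Req_EM_T u u0 then cosh u0 else (sinh u - sinh u0) / (u - u0).
Definition dPf (c b0 b : R) : R := (b + b0 + c) / (Pf c b + Pf c b0).

Lemma qf_id u0 u : sinh u - sinh u0 = qf u0 u * (u - u0).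
Proof. unfold qf. destruct (Req_EM_T u u0). subst; ring. field. intro; apply n; lra. Qed.

Lemma qf_ge1 u0 u : 1 <= qf u0 u.
Proof.
  unfold qf. destruct (Req_EM_T u u0). apply cosh_ge1.
  destruct (Rlt_or_le u u0).
  - generalize (sinh_lip u u0 ltac:(lra)); intros.
    replace ((sinh u - sinh u0) / (u - u0)) with ((sinh u0 - sinh u) / (u0 - u)) by (field; split; lra).
    apply (Rmult_le_reg_r (u0 - u)). lra. field_simplify; lra.
  - generalize (sinh_lip u0 u ltac:(lra)); intros.
    apply (Rmult_le_reg_r (u - u0)). lra. field_simplify; lra.
Qed.

Lemma qf_cont u0 : continuous (qf u0) u0.
Proof.
  apply continuity_pt_filterlim. intros eps Heps.
  destruct (derivable_pt_lim_sinh u0 eps Heps) as [d Hd].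
  exists d. split. apply cond_pos. intros y [[_ Hy] Hyd]. simpl in *. unfold R_dist in *.
  unfold qf. destruct (Req_EM_T u0 u0) as [_|C]; [|exfalso; auto].
  destruct (Req_EM_T y u0) as [E|Ne]. { subst. exfalso; auto. }
  specialize (Hd (y - u0) ltac:(lra) Hyd). replace (u0 + (y - u0)) with y in Hd by ring. auto.
Qed.

Lemma Pmb_mono c b1 b2 : 0 < c -> 0 < b1 -> b1 <= b2 -> Pf c b1 - b1 <= Pf c b2 - b2.
Proof.
  intros Hc Hb1 Hb.
  destruct (Pf_facts c b1 Hc Hb1) as [A1 [A2 A3]]. destruct (Pf_facts c b2 Hc ltac:(lra)) as [B1 [B2 B3]].
  set (P1 := Pf c b1) in *. set (P2 := Pf c b2) in *.
  destruct (Rle_or_lt (P1 + (b2 - b1)) P2); [lra|].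
  exfalso. assert (P2 * P2 < (P1 + (b2 - b1)) * (P1 + (b2 - b1))) by nra.
  assert ((2 * b1 + c) * (2 * b1 + c) >= 4 * (P1 * P1)) by nra.
  destruct (Req_dec b1 b2). subst b2. lra.
  assert (2 * b1 + c < 2 * P1) by nra. nra.
Qed.

Lemma P_mono c b1 b2 : 0 < c -> 0 < b1 -> b1 <= b2 -> Pf c b1 <= Pf c b2.
Proof. intros. generalize (Pmb_mono c b1 b2 H H0 H1). lra. Qed.

Lemma dPf_id c b0 b : 0 < c -> 0 < b0 -> 0 < b -> Pf c b - Pf c b0 = (b - b0) * dPf c b0 b.
Proof.
  intros Hc Hb0 Hb. destruct (Pf_facts c b Hc Hb) as [A1 [A2 A3]]. destruct (Pf_facts c b0 Hc Hb0) as [B1 [B2 B3]].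
  unfold dPf. apply (Rmult_eq_reg_r (Pf c b + Pf c b0)); [|lra].
  field_simplify; [|lra]. nra.
Qed.

Lemma dPf_lim c b0 : 0 < c -> 0 < b0 -> is_lim (dPf c b0) b0 ((2 * b0 + c) / (2 * Pf c b0)).
Proof.
  intros Hc Hb0. replace ((2 * b0 + c) / (2 * Pf c b0)) with (dPf c b0 b0).
  apply is_lim_continuity. apply derivable_continuous_pt. apply ex_derive_Reals_0.
  unfold dPf, Pf. auto_derive. destruct (Pf_facts c b0 Hc Hb0) as [B1 [B2 B3]]. unfold Pf in *.
  split; [nra| split; [lra| auto]].
  unfold dPf. destruct (Pf_facts c b0 Hc Hb0) as [B1 [B2 B3]]. field. lra.
Qed.

Lemma U_key c T b0 b : 0 < c -> 0 < b0 -> 0 < b -> 0 <= T ->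
  (Ub c T b - Ub c T b0) * (Pf c b0 * qf (Ub c T b0) (Ub c T b) - b0)
  = (b - b0) * (Ub c T b - dPf c b0 b * sinh (Ub c T b)).
Proof.
  intros Hc Hb0 Hb HT.
  destruct (Ub_spec c T b Hc Hb HT) as [_ E1]. destruct (Ub_spec c T b0 Hc Hb0 HT) as [_ E0].
  generalize (qf_id (Ub c T b0) (Ub c T b)) (dPf_id c b0 b Hc Hb0 Hb).
  set (u := Ub c T b) in *. set (u0 := Ub c T b0) in *. set (q := qf u0 u). set (dP := dPf c b0 b).
  set (P := Pf c b) in *. set (P0 := Pf c b0) in *. intros Hq HdP.
  transitivity (P0 * (q * (u - u0)) - b0 * (u - u0)). ring. rewrite <- Hq.
  transitivity ((b - b0) * u - ((b - b0) * dP) * sinh u). 2: ring. rewrite <- HdP.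
  lra.
Qed.

Lemma ratio_bound X Y Aq Bq k M : 0 < k -> k <= Bq -> Rabs Aq <= M -> X * Bq = Y * Aq -> Rabs X * k <= Rabs Y * M.
Proof.
  intros Hk HkB HA E. assert (Rabs X * Bq = Rabs Y * Rabs Aq).
  { rewrite <- (Rabs_right Bq) by lra. rewrite <- !Rabs_mult, E. auto. }
  assert (Rabs X * k <= Rabs X * Bq) by (apply Rmult_le_compat_l; auto; apply Rabs_pos).
  assert (Rabs Y * Rabs Aq <= Rabs Y * M) by (apply Rmult_le_compat_l; auto; apply Rabs_pos). lra.
Qed.

Lemma U_cont c T b0 : 0 < c -> 0 < b0 -> 0 <= T -> is_lim (Ub c T) b0 (Ub c T b0).
Proof.
  intros Hc Hb0 HT. apply eps_is_lim. intros eps Heps.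
  destruct (Pf_facts c b0 Hc Hb0) as [B1 [B2 B3]].
  set (P0 := Pf c b0) in *.
  set (b1 := b0 / 2). assert (Hb1 : 0 < b1) by (unfold b1; lra).
  destruct (Pf_facts c b1 Hc Hb1) as [C1 [C2 C3]].
  set (m1 := Pf c b1 - b1). assert (Hm1 : 0 < m1) by (unfold m1; lra).
  set (D1 := (5 * b0 / 2 + c) / P0). assert (HD1 : 0 < D1) by (unfold D1; apply Rdiv_lt_0_compat; lra).
  set (M0 := (1 + D1) * T / m1). assert (HM0 : 0 <= M0) by (unfold M0; apply Rdiv_le_0_compat; nra).
  set (d := Rmin (b0 / 2) (eps * (P0 - b0) / (M0 + 1))).
  assert (Hd : 0 < d). { unfold d. apply Rmin_glb_lt. lra. apply Rdiv_lt_0_compat; nra. }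
  exists d. split; auto. intros y Hne Hy.
  assert (Hy1 : Rabs (y - b0) < b0 / 2) by (apply Rlt_le_trans with (1 := Hy); apply Rmin_l).
  assert (Hy2 : Rabs (y - b0) < eps * (P0 - b0) / (M0 + 1)) by (apply Rlt_le_trans with (1 := Hy); apply Rmin_r).
  apply Rabs_def2 in Hy1. destruct Hy1 as [Hy1a Hy1b].
  assert (Hy0 : 0 < y) by lra.
  destruct (Pf_facts c y Hc Hy0) as [A1 [A2 A3]].
  destruct (Ub_spec c T y Hc Hy0 HT) as [HU1 HU2].
  set (u := Ub c T y) in *.
  assert (Hsh := sinh_ge_id u HU1).
  assert (Hmy : m1 <= Pf c y - y) by (unfold m1, b1; apply Pmb_mono; lra).
  assert (HshT : sinh u * m1 <= T).
  { rewrite <- HU2. assert (y * u <= y * sinh u) by (apply Rmult_le_compat_l; lra). nra. }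
  assert (HdP0 : 0 <= dPf c b0 y) by (unfold dPf; fold P0; apply Rdiv_le_0_compat; lra).
  assert (HdP : dPf c b0 y <= D1).
  { unfold dPf, D1. fold P0. apply Rle_trans with ((y + b0 + c) / P0).
    apply Rmult_le_compat_l. lra. apply Rinv_le_contravar; lra.
    apply Rmult_le_compat_r. left; apply Rinv_0_lt_compat; lra. lra. }
  assert (HA : Rabs (u - dPf c b0 y * sinh u) <= M0).
  { assert (sinh u <= T / m1) by (apply (Rmult_le_reg_r m1); auto; field_simplify; lra).
    assert (Hs : (1 + D1) * sinh u <= M0) by (unfold M0; replace ((1 + D1) * T / m1) with ((1+D1) * (T / m1)) by (field; lra); apply Rmult_le_compat_l; lra).
    apply Rabs_le. assert (dPf c b0 y * sinh u <= D1 * sinh u) by (apply Rmult_le_compat_r; lra).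
    assert (0 <= dPf c b0 y * sinh u) by (apply Rmult_le_pos; lra). nra. }
  assert (HK := U_key c T b0 y Hc Hb0 Hy0 HT). fold u P0 in HK.
  assert (Hq := qf_ge1 (Ub c T b0) u).
  assert (HR : Rabs (u - Ub c T b0) * (P0 - b0) <= Rabs (y - b0) * M0).
  { eapply ratio_bound; [lra| |exact HA| exact HK]. nra. }
  assert (Rabs (y - b0) * M0 <= eps * (P0 - b0) / (M0 + 1) * M0) by (apply Rmult_le_compat_r; lra).
  assert (eps * (P0 - b0) / (M0 + 1) * M0 < eps * (P0 - b0)).
  { apply (Rmult_lt_reg_r (M0 + 1)). lra. field_simplify; [|lra]. nra. }
  apply (Rmult_lt_reg_r (P0 - b0)); lra.
Qed.
Lemma alg_id P b c ch sh u : 0 < b -> b < P -> 0 < c -> P * P = b * b + c * b ->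
  ch * ch - sh * sh = 1 -> 0 < P * ch - b ->
  (2*b + c)/(2*P) * ch + P * (sh * ((u - (2*b + c)/(2*P) * sh) / (P * ch - b))) - 1 =
  ((b*c^3/(2*P*((4*b+c)*P + 4*b^2 + 3*b*c))) + (b*c/(2*P))*(ch - 1) + P * (u * sh - 2 * ch + 2)) / ((P - b) + P * (ch - 1)).
Proof.
  intros Hb HP Hc HP2 Hch HD.
  assert (Hden : (4*b+c)*P + 4*b^2 + 3*b*c > 0) by nra.
  replace ((P - b) + P * (ch - 1)) with (P * ch - b) by ring.
  apply (Rmult_eq_reg_r ((P * ch - b) * (2 * P) * ((4*b+c)*P + 4*b^2 + 3*b*c))); [| apply Rmult_integral_contrapositive; split; [apply Rmult_integral_contrapositive; split|]; lra].
  field_simplify; try lra.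
  assert (E1 : sh ^ 2 = ch ^ 2 - 1) by nra.
  assert (E3 : P ^ 3 = P * (b * b + c * b)) by (rewrite <- HP2; ring).
  assert (E2 : P ^ 2 = b * b + c * b) by (rewrite <- HP2; ring).
  rewrite E1, E3, E2. ring.
Qed.

Lemma lim_minus (f g : R -> R) (x a b : R) : is_lim f x a -> is_lim g x b -> is_lim (fun y => f y - g y) x (a - b).
Proof. intros. eapply is_lim_minus; eauto. simpl. reflexivity. Qed.
Lemma lim_mult (f g : R -> R) (x a b : R) : is_lim f x a -> is_lim g x b -> is_lim (fun y => f y * g y) x (a * b).
Proof. intros. apply (is_lim_mult f g x a b); auto. simpl; auto. Qed.
Lemma lim_const (x a : R) : is_lim (fun _ => a) x a.
Proof. apply is_lim_const. Qed.
Lemma lim_comp (f g : R -> R) (x a : R) : is_lim f x a -> continuous g a -> is_lim (fun y => g (f y)) x (g a).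
Proof. intros. apply is_lim_comp_continuous; auto. Qed.

Lemma U_deriv c T b0 : 0 < c -> 0 < b0 -> 0 <= T ->
  is_derive (Ub c T) b0
   ((Ub c T b0 - (2 * b0 + c) / (2 * Pf c b0) * sinh (Ub c T b0)) /
    (Pf c b0 * cosh (Ub c T b0) - b0)).
Proof.
  intros Hc Hb0 HT.
  destruct (Pf_facts c b0 Hc Hb0) as [B1 [B2 B3]].
  assert (HU := U_cont c T b0 Hc Hb0 HT).
  set (u0 := Ub c T b0) in *.
  assert (Hsc : continuous sinh u0).
  { apply continuity_pt_filterlim. apply derivable_continuous_pt. exists (cosh u0). apply derivable_pt_lim_sinh. }
  assert (HA := lim_minus _ _ _ _ _ HU (lim_mult _ _ _ _ _ (dPf_lim c b0 Hc Hb0) (lim_comp _ _ _ _ HU Hsc))).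
  assert (HB := lim_minus _ _ _ _ _ (lim_mult _ _ _ _ _ (lim_const b0 (Pf c b0)) (lim_comp _ _ _ _ HU (qf_cont u0))) (lim_const b0 b0)).
  assert (Hq0 : qf u0 u0 = cosh u0) by (unfold qf; destruct (Req_EM_T u0 u0); [auto| exfalso; auto]).
  rewrite Hq0 in HB.
  assert (Hpos : 0 < Pf c b0 * cosh u0 - b0) by (generalize (cosh_ge1 u0); nra).
  apply (implicit_deriv (Ub c T) (fun b => Ub c T b - dPf c b0 b * sinh (Ub c T b))
    (fun b => Pf c b0 * qf u0 (Ub c T b) - b0) b0 _ _ b0 Hb0).
  intros b Hne Hb. apply Rabs_def2 in Hb. apply U_key; lra.
  exact HA. exact HB. lra.
Qed.

Lemma Pf_deriv c b : 0 < c -> 0 < b -> is_derive (Pf c) b ((2 * b + c) / (2 * Pf c b)).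
Proof.
  intros Hc Hb. destruct (Pf_facts c b Hc Hb) as [B1 [B2 B3]]. unfold Pf in *.
  auto_derive. nra. field. lra.
Qed.

Definition N0f (c b : R) := b * c ^ 3 / (2 * Pf c b * ((4 * b + c) * Pf c b + 4 * b ^ 2 + 3 * b * c)).
Definition Nf (c b u : R) := N0f c b + (b * c / (2 * Pf c b)) * (cosh u - 1) + Pf c b * hh u.
Definition Df (c b u : R) := (Pf c b - b) + Pf c b * (cosh u - 1).

Lemma deriv_gen (P U : R -> R) b0 dPv dUv : is_derive P b0 dPv -> is_derive U b0 dUv ->
  is_derive (fun b => P b * cosh (U b) - b) b0 (dPv * cosh (U b0) + P b0 * (sinh (U b0) * dUv) - 1).
Proof.
  intros HP HU. unfold cosh, sinh. auto_derive.
  repeat split; try (exists dPv; exact HP); try (exists dUv; exact HU).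
  replace (Derive (fun x => P x) b0) with dPv by (symmetry; apply is_derive_unique; exact HP).
  replace (Derive (fun x => U x) b0) with dUv by (symmetry; apply is_derive_unique; exact HU).
  field.
Qed.

Lemma Rb_deriv c T b0 : 0 < c -> 0 < b0 -> 0 <= T ->
  is_derive (Rb c T) b0 (Nf c b0 (Ub c T b0) / Df c b0 (Ub c T b0)).
Proof.
  intros Hc Hb0 HT. destruct (Pf_facts c b0 Hc Hb0) as [B1 [B2 B3]].
  assert (Hd := deriv_gen (Pf c) (Ub c T) b0 _ _ (Pf_deriv c b0 Hc Hb0) (U_deriv c T b0 Hc Hb0 HT)).
  replace (Nf c b0 (Ub c T b0) / Df c b0 (Ub c T b0)) with
    ((2 * b0 + c) / (2 * Pf c b0) * cosh (Ub c T b0) + Pf c b0 * (sinh (Ub c T b0) * ((Ub c T b0 - (2 * b0 + c) / (2 * Pf c b0) * sinh (Ub c T b0)) /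
    (Pf c b0 * cosh (Ub c T b0) - b0))) - 1).
  exact Hd.
  unfold Nf, N0f, Df, hh. apply alg_id; auto. apply cosh_sinh_sq.
  generalize (cosh_ge1 (Ub c T b0)); nra.
Qed.
Lemma cosh_ge_sinh x : sinh x < cosh x.
Proof. generalize (cosh_minus_sinh x) (exp_pos (-x)). lra. Qed.

Definition MK (K : R) := 5 * K ^ 4 * cosh (3 * K).

Lemma MK_ge K : 1 <= K -> 5 * K ^ 4 <= MK K /\ 5 <= MK K /\ K ^ 3 <= MK K /\ 5 * K <= MK K /\ 5 * K ^ 2 <= MK K.
Proof.
  intros HK. unfold MK. assert (Hc := cosh_ge1 (3 * K)).
  assert (H2 : 1 <= K ^ 2) by nra. assert (H3 : K ^ 2 <= K ^ 3) by (simpl; nra). assert (H4 : K ^ 3 <= K ^ 4) by (simpl; nra).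
  assert (5 * K ^ 4 <= 5 * K ^ 4 * cosh (3 * K)) by nra.
  repeat split; nra.
Qed.

Lemma wh_comp s K u1 u2 : 0 <= s -> s < 1 -> 1 <= K -> 0 <= u2 -> u2 <= u1 ->
  sinh u1 - s * u1 <= K * (sinh u2 - s * u2) ->
  cosh u1 - 1 <= MK K * (cosh u2 - 1) /\ hh u1 <= MK K * hh u2.
Proof.
  intros Hs0 Hs1 HK Hu2 Hu Hphi.
  destruct (MK_ge K HK) as [M1 [M2 [M3 [M4 M5]]]].
  assert (HuK : u1 <= K * u2).
  { destruct (Rle_or_lt u1 (K * u2)); auto. exfalso.
    assert (sinh (K * u2) - s * (K * u2) < sinh u1 - s * u1).
    { generalize (g_strict 1 s (K * u2) u1 Hs0 ltac:(lra) H). lra. }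
    generalize (sinh_scale K u2 HK Hu2). nra. }
  assert (Hu1 : 0 <= u1) by lra.
  assert (Hw1 := cosh_m1_le_sinh u1 Hu1).
  assert (Hh2 := hh_ge u2 Hu2). assert (Hw2 := cosh_m1_ge u2 Hu2).
  destruct (Rle_or_lt 3 u2) as [Hbig|Hsmall].
  - assert (Hs1c := sinh_ge_cubic u1 Hu1). assert (Hs2c := sinh_ge_cubic u2 Hu2).
    assert (Hu1c : 9 * u1 <= u1 ^ 3) by (simpl; nra).
    assert (Hu2c : 9 * u2 <= u2 ^ 3) by (simpl; nra).
    assert (A1 : 3 * sinh u1 <= 5 * K * sinh u2).
    { assert (sinh u1 - u1 <= K * sinh u2) by nra. lra. }
    assert (Hsu2 : 7 <= sinh u2) by lra.
    assert (Hw2' : sinh u2 <= 2 * (cosh u2 - 1)) by (generalize (cosh_ge_sinh u2); lra).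
    split.
    + assert (5 * K * sinh u2 <= 5 * K * (2 * (cosh u2 - 1))) by (apply Rmult_le_compat_l; lra).
      assert (5 * K * (cosh u2 - 1) <= MK K * (cosh u2 - 1)) by (apply Rmult_le_compat_r; lra). lra.
    + unfold hh in *.
      assert (E1 : u1 * sinh u1 - 2 * cosh u1 + 2 <= u1 * sinh u1) by (generalize (cosh_ge1 u1); lra).
      assert (E2 : 3 * (u1 * sinh u1) <= (K * u2) * (5 * K * sinh u2)).
      { assert (0 <= sinh u1) by (apply sinh_nonneg; lra).
        assert (u1 * (3 * sinh u1) <= (K * u2) * (5 * K * sinh u2)) by (apply Rmult_le_compat; lra). lra. }
      assert (E3 : u2 * sinh u2 <= 3 * (u2 * sinh u2 - 2 * cosh u2 + 2)).
      { assert (2 * sinh u2 <= 2 / 3 * (u2 * sinh u2)) by nra. generalize (cosh_m1_le_sinh u2 Hu2). lra. }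
      assert (E4 : (K * u2) * (5 * K * sinh u2) = 5 * K ^ 2 * (u2 * sinh u2)) by ring.
      assert (Hhp : 0 <= u2 * sinh u2 - 2 * cosh u2 + 2) by (simpl in Hh2; nra).
      assert (5 * K ^ 2 * (u2 * sinh u2) <= 5 * K ^ 2 * (3 * (u2 * sinh u2 - 2 * cosh u2 + 2))) by (apply Rmult_le_compat_l; nra).
      assert (5 * K ^ 2 * (u2 * sinh u2 - 2 * cosh u2 + 2) <= MK K * (u2 * sinh u2 - 2 * cosh u2 + 2)) by (apply Rmult_le_compat_r; lra).
      nra.
  - assert (Hu1B : u1 <= 3 * K) by nra.
    assert (HcB : cosh u1 <= cosh (3 * K)) by (apply cosh_mono; lra).
    assert (HK2 : u1 ^ 2 <= K ^ 2 * u2 ^ 2) by (rewrite <- Rpow_mult_distr; apply pow_incr; lra).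
    assert (HK4 : u1 ^ 4 <= K ^ 4 * u2 ^ 4) by (rewrite <- Rpow_mult_distr; apply pow_incr; lra).
    split.
    + assert (W := cosh_m1_le u1 Hu1).
      assert (u1 ^ 2 / 2 * cosh u1 <= (K ^ 2 * u2 ^ 2) / 2 * cosh (3 * K)).
      { apply Rmult_le_compat. assert (0 <= u1 ^ 2) by apply pow2_ge_0. lra. generalize (cosh_ge1 u1); lra. lra. auto. }
      assert ((K ^ 2 * u2 ^ 2) / 2 * cosh (3 * K) = (K ^ 2 * cosh (3 * K)) * (u2 ^ 2 / 2)) by field.
      assert (K ^ 2 <= 5 * K ^ 4) by (assert (K ^ 4 = K^2 * K^2) by ring; assert (1 <= K^2) by (simpl; nra); nra).
      assert (K ^ 2 * cosh (3 * K) <= MK K) by (unfold MK; apply Rmult_le_compat_r; [generalize (cosh_ge1 (3*K)); lra| lra]).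
      assert (0 <= u2 ^ 2 / 2) by (assert (0 <= u2 ^ 2) by apply pow2_ge_0; lra).
      assert ((K ^ 2 * cosh (3 * K)) * (u2 ^ 2 / 2) <= MK K * (cosh u2 - 1)) by (apply Rmult_le_compat; try lra; apply Rmult_le_pos; [apply pow_le; lra| generalize (cosh_ge1 (3*K)); lra]).
      lra.
    + assert (W := hh_le u1 Hu1).
      assert (u1 ^ 4 / 12 * cosh u1 <= (K ^ 4 * u2 ^ 4) / 12 * cosh (3 * K)).
      { apply Rmult_le_compat. assert (0 <= u1 ^ 4) by (apply pow_le; lra). lra. generalize (cosh_ge1 u1); lra. lra. auto. }
      assert ((K ^ 4 * u2 ^ 4) / 12 * cosh (3 * K) = (K ^ 4 * cosh (3 * K)) * (u2 ^ 4 / 12)) by field.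
      assert (K ^ 4 * cosh (3 * K) <= MK K) by (unfold MK; generalize (cosh_ge1 (3*K)); assert (0 <= K^4) by (apply pow_le; lra); nra).
      assert (0 <= u2 ^ 4 / 12) by (assert (0 <= u2 ^ 4) by (apply pow_le; lra); lra).
      assert ((K ^ 4 * cosh (3 * K)) * (u2 ^ 4 / 12) <= MK K * hh u2) by (apply Rmult_le_compat; try lra; apply Rmult_le_pos; [apply pow_le; lra| generalize (cosh_ge1 (3*K)); lra]).
      lra.
Qed.


Lemma div_le_k a b c d k : 0 < b -> 0 < d -> a * d <= k * c * b -> a / b <= k * (c / d).
Proof.
  intros Hb Hd H. apply (Rmult_le_reg_r (b * d)). nra.
  replace (a / b * (b * d)) with (a * d) by (field; lra).
  replace (k * (c / d) * (b * d)) with (k * c * b) by (field; lra). auto.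
Qed.

Lemma prod3_le x1 x2 x3 y1 y2 y3 : 0 <= x1 <= y1 -> 0 <= x2 <= y2 -> 0 <= x3 <= y3 -> x1 * x2 * x3 <= y1 * y2 * y3.
Proof. intros. apply Rmult_le_compat; try apply Rmult_le_pos; try apply Rmult_le_compat; lra. Qed.

Lemma Q_comp c T K b1 b2 : 0 < c -> 0 <= T -> 1 <= K -> 0 < b1 -> b1 <= b2 -> b2 <= K * b1 ->
  Nf c b1 (Ub c T b1) / Df c b1 (Ub c T b1) <= K * MK K * (Nf c b2 (Ub c T b2) / Df c b2 (Ub c T b2)) /\
  Nf c b2 (Ub c T b2) / Df c b2 (Ub c T b2) <= K * MK K * (Nf c b1 (Ub c T b1) / Df c b1 (Ub c T b1)).
Proof.
  intros Hc HT HK Hb1 Hb12 Hb2K.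
  assert (Hb2 : 0 < b2) by lra.
  destruct (Pf_facts c b1 Hc Hb1) as [A1 [A2 A3]]. destruct (Pf_facts c b2 Hc Hb2) as [B1 [B2 B3]].
  destruct (Ub_spec c T b1 Hc Hb1 HT) as [U1 E1]. destruct (Ub_spec c T b2 Hc Hb2 HT) as [U2 E2].
  assert (HPm := Pmb_mono c b1 b2 Hc Hb1 Hb12).
  unfold Nf, Df, N0f.
  set (P1 := Pf c b1) in *. set (P2 := Pf c b2) in *.
  set (u1 := Ub c T b1) in *. set (u2 := Ub c T b2) in *.
  destruct (MK_ge K HK) as [M1 [M2 [M3 [M4 M5]]]]. set (M := MK K) in *.
  assert (Hsig : b1 * P2 <= b2 * P1).
  { assert (b1 * P2 * (b1 * P2) <= b2 * P1 * (b2 * P1)).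
    { replace (b1 * P2 * (b1 * P2)) with (b1 * b1 * (P2 * P2)) by ring.
      replace (b2 * P1 * (b2 * P1)) with (b2 * b2 * (P1 * P1)) by ring. rewrite A2, B2.
      assert (0 <= b1 * b2 * c * (b2 - b1)) by (apply Rmult_le_pos; [|lra]; repeat apply Rmult_le_pos; lra). nra. }
    assert (0 < b1 * P2) by nra. assert (0 < b2 * P1) by nra. nra. }
  assert (HP2K : P2 <= K * P1).
  { assert (P2 * P2 <= (K * P1) * (K * P1)).
    { rewrite B2. replace (K * P1 * (K * P1)) with (K * K * (P1 * P1)) by ring. rewrite A2.
      assert (b2 * b2 <= K * b1 * (K * b1)) by nra. assert (c * b2 <= c * (K * b1)) by (apply Rmult_le_compat_l; lra). assert (c * (K * b1) <= K * K * (c * b1)) by (assert (K <= K * K) by nra; assert (0 <= c * b1) by nra; nra). nra. }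
    nra. }
  assert (HP12 : P1 <= P2) by lra.
  assert (Hu : u2 <= u1).
  { destruct (Rle_or_lt u2 u1); auto. exfalso.
    generalize (g_strict P1 b1 u1 u2 ltac:(lra) A3 H). intros.
    assert (Hsh := sinh_ge_id u2 U2).
    assert ((b2 - b1) * u2 <= (P2 - P1) * sinh u2).
    { apply Rle_trans with ((b2 - b1) * sinh u2). apply Rmult_le_compat_l; lra. apply Rmult_le_compat_r; lra. }
    lra. }
  set (s := b1 / P1).
  assert (Hs0 : 0 <= s) by (unfold s; apply Rdiv_le_0_compat; lra).
  assert (Hs1 : s < 1) by (unfold s; apply (Rmult_lt_reg_r P1); auto; field_simplify; lra).
  assert (Hphi : sinh u1 - s * u1 <= K * (sinh u2 - s * u2)).
  { assert (Hsh := sinh_ge_id u2 U2).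
    assert (H1 : P1 * (sinh u1 - s * u1) = T) by (rewrite <- E1; unfold s; field; lra).
    assert (H2 : T <= P2 * (sinh u2 - s * u2)).
    { rewrite <- E2. unfold s. assert (P2 * (b1 / P1) * u2 <= b2 * u2).
      { apply Rmult_le_compat_r; auto. apply (Rmult_le_reg_r P1); auto. field_simplify; lra. }
      replace (P2 * (sinh u2 - b1 / P1 * u2)) with (P2 * sinh u2 - P2 * (b1 / P1) * u2) by ring. lra. }
    assert (0 <= sinh u2 - s * u2) by (assert (s * u2 <= u2) by nra; lra).
    assert (H3 : P2 * (sinh u2 - s * u2) <= K * P1 * (sinh u2 - s * u2)) by (apply Rmult_le_compat_r; lra).
    apply (Rmult_le_reg_l P1); auto. nra. }
  destruct (wh_comp s K u1 u2 Hs0 Hs1 HK U2 Hu Hphi) as [Hw Hh].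
  fold M in Hw, Hh.
  assert (Hw12 : cosh u2 - 1 <= cosh u1 - 1) by (generalize (cosh_mono u2 u1 U2 Hu); lra).
  assert (Hh12 : hh u2 <= hh u1) by (apply hh_mono; lra).
  assert (Hw2 : 0 <= cosh u2 - 1) by (generalize (cosh_ge1 u2); lra).
  assert (Hh2 : 0 <= hh u2) by (generalize (hh_ge u2 U2); assert (0 <= u2 ^ 4) by (apply pow_le; lra); lra).
  set (X1 := (4 * b1 + c) * P1 + 4 * b1 ^ 2 + 3 * b1 * c).
  set (X2 := (4 * b2 + c) * P2 + 4 * b2 ^ 2 + 3 * b2 * c).
  assert (HX1 : 0 < X1) by (unfold X1; nra).
  assert (HX12 : X1 <= X2) by (unfold X1, X2; nra).
  assert (HX2K : X2 <= K ^ 2 * X1).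
  { unfold X1, X2. assert ((4 * b2 + c) <= K * (4 * b1 + c)) by nra.
    assert ((4 * b2 + c) * P2 <= (K * (4 * b1 + c)) * (K * P1)) by (apply Rmult_le_compat; lra).
    assert (b2 ^ 2 <= K ^ 2 * b1 ^ 2) by (rewrite <- Rpow_mult_distr; apply pow_incr; lra).
    assert (b2 * c <= K ^ 2 * (b1 * c)) by (assert (b2 * c <= (K * b1) * c) by (apply Rmult_le_compat_r; lra); assert (K <= K ^ 2) by (simpl; nra); assert (0 <= b1 * c) by nra; nra).
    nra. }
  assert (N0a : b2 * c ^ 3 / (2 * P2 * X2) <= K * (b1 * c ^ 3 / (2 * P1 * X1))).
  { apply div_le_k; try nra. assert (0 < c ^ 3) by (apply pow_lt; lra).
    replace (b2 * c ^ 3 * (2 * P1 * X1)) with (2 * c ^ 3 * (b2 * P1 * X1)) by ring.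
    replace (K * (b1 * c ^ 3) * (2 * P2 * X2)) with (2 * c ^ 3 * ((K * b1) * P2 * X2)) by ring.
    apply Rmult_le_compat_l. lra. apply prod3_le; lra. }
  assert (N0b : b1 * c ^ 3 / (2 * P1 * X1) <= K ^ 3 * (b2 * c ^ 3 / (2 * P2 * X2))).
  { apply div_le_k; try nra. assert (0 < c ^ 3) by (apply pow_lt; lra).
    replace (b1 * c ^ 3 * (2 * P2 * X2)) with (2 * c ^ 3 * (b1 * P2 * X2)) by ring.
    replace (K ^ 3 * (b2 * c ^ 3) * (2 * P1 * X1)) with (2 * c ^ 3 * (b2 * (K * P1) * (K ^ 2 * X1))) by ring.
    apply Rmult_le_compat_l. lra. apply prod3_le; try lra; split; nra. }
  assert (Sa : b1 * c / (2 * P1) <= 1 * (b2 * c / (2 * P2))).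
  { apply div_le_k; try nra. }
  assert (Sb : b2 * c / (2 * P2) <= K * (b1 * c / (2 * P1))).
  { apply div_le_k; try nra. assert (b2 * P1 <= K * b1 * P2) by nra. nra. }
  assert (Db : P2 - b2 <= K * (P1 - b1)).
  { assert (E : forall P b, P * P = b * b + c * b -> 0 < b -> b < P -> P - b = c * b / (P + b)).
    { intros P b HP Hb HbP. field_simplify_eq; nra. }
    rewrite (E P1 b1), (E P2 b2) by auto. apply div_le_k; try lra.
    assert (c * b2 * (P1 + b1) <= c * (K * b1) * (P2 + b2)) by (apply Rmult_le_compat; nra). nra. }
  set (N01 := b1 * c ^ 3 / (2 * P1 * X1)) in *. set (N02 := b2 * c ^ 3 / (2 * P2 * X2)) in *.
  set (s1 := b1 * c / (2 * P1)) in *. set (s2 := b2 * c / (2 * P2)) in *.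
  set (w1 := cosh u1 - 1) in *. set (w2 := cosh u2 - 1) in *.
  assert (Hs1p : 0 <= s1) by (unfold s1; apply Rdiv_le_0_compat; nra).
  assert (HN02 : 0 < N02) by (unfold N02; apply Rdiv_lt_0_compat; [apply Rmult_lt_0_compat; [lra| apply pow_lt; lra]| nra]).
  assert (HN1 : N01 + s1 * w1 + P1 * hh u1 <= M * (N02 + s2 * w2 + P2 * hh u2)).
  { assert (N01 <= M * N02) by nra.
    assert (s1 * w1 <= s2 * (M * w2)) by (apply Rmult_le_compat; lra).
    assert (P1 * hh u1 <= P2 * (M * hh u2)) by (apply Rmult_le_compat; lra). nra. }
  assert (HN2 : N02 + s2 * w2 + P2 * hh u2 <= K * (N01 + s1 * w1 + P1 * hh u1)).
  { assert (s2 * w2 <= (K * s1) * w1) by (apply Rmult_le_compat; lra).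
    assert (P2 * hh u2 <= (K * P1) * hh u1) by (apply Rmult_le_compat; lra). nra. }
  assert (HD2 : P2 - b2 + P2 * w2 <= K * (P1 - b1 + P1 * w1)).
  { assert (P2 * w2 <= (K * P1) * w1) by (apply Rmult_le_compat; lra). nra. }
  assert (HD1 : P1 - b1 + P1 * w1 <= M * (P2 - b2 + P2 * w2)).
  { assert (P1 * w1 <= P2 * (M * w2)) by (apply Rmult_le_compat; lra). nra. }
  assert (HD1p : 0 < P1 - b1 + P1 * w1) by nra.
  assert (HD2p : 0 < P2 - b2 + P2 * w2) by nra.
  assert (HN1p : 0 < N01 + s1 * w1 + P1 * hh u1) by nra.
  split; apply div_le_k; auto.
  - assert (0 <= N02 + s2 * w2 + P2 * hh u2) by nra.
    apply Rle_trans with ((M * (N02 + s2 * w2 + P2 * hh u2)) * (K * (P1 - b1 + P1 * w1))).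
    apply Rmult_le_compat; nra. right; ring.
  - apply Rle_trans with ((K * (N01 + s1 * w1 + P1 * hh u1)) * (M * (P2 - b2 + P2 * w2))).
    apply Rmult_le_compat; nra. right; ring.
Qed.

Lemma Q_pos c T b : 0 < c -> 0 < b -> 0 <= T -> 0 < Nf c b (Ub c T b) / Df c b (Ub c T b).
Proof.
  intros Hc Hb HT. destruct (Pf_facts c b Hc Hb) as [A1 [A2 A3]].
  destruct (Ub_spec c T b Hc Hb HT) as [U1 _].
  unfold Nf, Df, N0f. set (P := Pf c b) in *. set (u := Ub c T b) in *.
  assert (Hw := cosh_ge1 u). assert (Hh := hh_ge u U1). assert (0 <= u ^ 4) by (apply pow_le; lra).
  apply Rdiv_lt_0_compat; [|nra].
  assert (0 < b * c ^ 3 / (2 * P * ((4 * b + c) * P + 4 * b ^ 2 + 3 * b * c))).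
  { apply Rdiv_lt_0_compat. apply Rmult_lt_0_compat; [lra| apply pow_lt; lra]. 
    apply Rmult_lt_0_compat. lra. nra. }
  assert (0 <= b * c / (2 * P) * (cosh u - 1)) by (apply Rmult_le_pos; [apply Rdiv_le_0_compat; nra| lra]).
  assert (0 <= P * hh u) by (apply Rmult_le_pos; lra). lra.
Qed.

Definition Qa (m theta l x : R) :=
  Nf (2 * l / m) (m / (2 * x ^ 2)) (Ub (2 * l / m) (Rabs theta) (m / (2 * x ^ 2))) /
  Df (2 * l / m) (m / (2 * x ^ 2)) (Ub (2 * l / m) (Rabs theta) (m / (2 * x ^ 2))).

Lemma Rfun_deriv m theta l a : 0 < m -> 0 < l -> 0 < a ->
  is_derive (fun x => Rfun m theta x l) a (Qa m theta l a * (- m / a ^ 3)).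
Proof.
  intros Hm Hl Ha.
  assert (Hc : 0 < 2 * l / m) by (apply Rdiv_lt_0_compat; lra).
  assert (Hb : 0 < m / (2 * a ^ 2)) by (apply Rdiv_lt_0_compat; [lra| apply Rmult_lt_0_compat; [lra|apply pow_lt; lra]]).
  apply is_derive_ext_loc with (f := fun x => Rb (2 * l / m) (Rabs theta) (m / (2 * x ^ 2))).
  { exists (mkposreal a Ha). intros y Hy. simpl in Hy. unfold ball in Hy; simpl in Hy. unfold AbsRing_ball in Hy. simpl in Hy.
    unfold abs, minus, plus, opp in Hy; simpl in Hy. apply Rabs_def2 in Hy.
    symmetry. apply Rfun_eq; lra. }
  assert (Hg : is_derive (fun x => m / (2 * x ^ 2)) a (- m / a ^ 3)).
  { auto_derive. nra. field. lra. }
  assert (Hf := Rb_deriv (2 * l / m) (Rabs theta) (m / (2 * a ^ 2)) Hc Hb (Rabs_pos theta)).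
  assert (H := is_derive_comp (Rb (2 * l / m) (Rabs theta)) (fun x => m / (2 * x ^ 2)) a _ _ Hf Hg). simpl in H.
  unfold Qa. replace (Nf (2 * l / m) (m / (2 * a ^ 2)) (Ub (2 * l / m) (Rabs theta) (m / (2 * a ^ 2))) /
   Df (2 * l / m) (m / (2 * a ^ 2)) (Ub (2 * l / m) (Rabs theta) (m / (2 * a ^ 2))) * (- m / a ^ 3))
   with (scal (- m / a ^ 3) (Nf (2 * l / m) (m / (2 * a ^ 2)) (Ub (2 * l / m) (Rabs theta) (m / (2 * a ^ 2))) /
   Df (2 * l / m) (m / (2 * a ^ 2)) (Ub (2 * l / m) (Rabs theta) (m / (2 * a ^ 2))))).
  exact H. unfold scal; simpl. unfold mult; simpl. ring.
Qed.

Lemma Qa_pos m theta l x : 0 < m -> 0 < l -> 0 < x -> 0 < Qa m theta l x.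
Proof.
  intros. unfold Qa. apply Q_pos. apply Rdiv_lt_0_compat; lra.
  apply Rdiv_lt_0_compat; [lra| apply Rmult_lt_0_compat; [lra|apply pow_lt; lra]]. apply Rabs_pos.
Qed.

Lemma b_ratio m x y k : 0 < m -> 0 < x -> 0 < y -> 0 < k -> x <= k * y -> m / (2 * y ^ 2) <= k ^ 2 * (m / (2 * x ^ 2)).
Proof.
  intros Hm Hx Hy Hk H. apply div_le_k. nra. nra.
  assert (x ^ 2 <= (k * y) ^ 2) by (apply pow_incr; lra).
  rewrite Rpow_mult_distr in H0. nra.
Qed.

Theorem lemma2p17 (m : R) (hm : 0 < m) :
  (forall theta l : R, 0 < l ->
     forall a1 a2 : R, 0 < a1 -> a1 < a2 ->
       Rfun m theta a2 l < Rfun m theta a1 l) /\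
  (forall C0 : R, 1 <= C0 ->
     exists C : R, 1 <= C /\
       forall theta a l : R, 0 < a -> 0 < l ->
         forall alpha beta : R,
           a / C0 <= alpha <= C0 * a ->
           a / C0 <= beta <= C0 * a ->
           Rabs (Derive (fun x => Rfun m theta x l) alpha)
             <= C * Rabs (Derive (fun x => Rfun m theta x l) beta)).
Proof.
  split.
  - intros theta l Hl a1 a2 Ha1 Ha12.
    destruct (MVT_gen (fun x => Rfun m theta x l) a1 a2 (fun x => Qa m theta l x * (- m / x ^ 3))) as [c [Hc Heq]].
    + intros x Hx. rewrite Rmin_left in Hx by lra. apply Rfun_deriv; lra.
    + intros x Hx. rewrite Rmin_left in Hx by lra. apply derivable_continuous_pt.
      exists (Qa m theta l x * (- m / x ^ 3)). apply is_derive_Reals, Rfun_deriv; lra.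
    + rewrite Rmin_left in Hc by lra. rewrite Rmax_right in Hc by lra.
      assert (HQ := Qa_pos m theta l c hm Hl ltac:(lra)).
      assert (0 < m / c ^ 3) by (apply Rdiv_lt_0_compat; [lra| apply pow_lt; lra]).
      assert (Qa m theta l c * (- m / c ^ 3) * (a2 - a1) < 0).
      { replace (Qa m theta l c * (- m / c ^ 3) * (a2 - a1)) with (- (Qa m theta l c * (m / c ^ 3) * (a2 - a1))) by (field; lra).
        assert (0 < Qa m theta l c * (m / c ^ 3) * (a2 - a1)) by (apply Rmult_lt_0_compat; [apply Rmult_lt_0_compat|]; lra). lra. }
      cbv beta in Heq. lra.
  - intros C0 HC0.
    set (K := C0 ^ 4).
    assert (HK : 1 <= K) by (unfold K; rewrite <- (pow1 4); apply pow_incr; lra).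
    destruct (MK_ge K HK) as [M1 [M2 _]].
    exists (C0 ^ 6 * (K * MK K)). split.
    { assert (1 <= C0 ^ 6) by (rewrite <- (pow1 6); apply pow_incr; lra).
      assert (1 <= K * MK K) by nra. nra. }
    intros theta a l Ha Hl alpha beta [Hal1 Hal2] [Hbe1 Hbe2].
    assert (Hal : 0 < alpha) by (apply Rlt_le_trans with (2 := Hal1); apply Rdiv_lt_0_compat; lra).
    assert (Hbe : 0 < beta) by (apply Rlt_le_trans with (2 := Hbe1); apply Rdiv_lt_0_compat; lra).
    replace (Derive (fun x => Rfun m theta x l) alpha) with (Qa m theta l alpha * (- m / alpha ^ 3))
      by (symmetry; apply is_derive_unique; apply Rfun_deriv; auto).
    replace (Derive (fun x => Rfun m theta x l) beta) with (Qa m theta l beta * (- m / beta ^ 3))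
      by (symmetry; apply is_derive_unique; apply Rfun_deriv; auto).
    assert (Qal := Qa_pos m theta l alpha hm Hl Hal). assert (Qbe := Qa_pos m theta l beta hm Hl Hbe).
    assert (Abs : forall x, 0 < x -> Rabs (Qa m theta l x * (- m / x ^ 3)) = Qa m theta l x * (m / x ^ 3)).
    { intros x Hx. rewrite Rabs_mult, Rabs_right by (generalize (Qa_pos m theta l x hm Hl Hx); lra).
      f_equal. rewrite Rabs_left. field. lra. apply (Rmult_lt_reg_r (x ^ 3)). apply pow_lt; lra. field_simplify; lra. }
    rewrite (Abs alpha Hal), (Abs beta Hbe).
    assert (HC0a : a <= C0 * alpha) by (apply (Rmult_le_reg_r (/ C0)); [apply Rinv_0_lt_compat; lra|]; field_simplify; lra).
    assert (HC0b : a <= C0 * beta) by (apply (Rmult_le_reg_r (/ C0)); [apply Rinv_0_lt_compat; lra|]; field_simplify; lra).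
    assert (Hab : alpha <= C0 ^ 2 * beta) by (simpl; nra).
    assert (Hba : beta <= C0 ^ 2 * alpha) by (simpl; nra).
    assert (HQ : Qa m theta l alpha <= K * MK K * Qa m theta l beta).
    { assert (Hc : 0 < 2 * l / m) by (apply Rdiv_lt_0_compat; lra).
      assert (Hbal := b_ratio m alpha beta (C0 ^ 2) hm Hal Hbe ltac:(apply pow_lt; lra) Hab).
      assert (Hbbe := b_ratio m beta alpha (C0 ^ 2) hm Hbe Hal ltac:(apply pow_lt; lra) Hba).
      rewrite <- pow_mult in Hbal, Hbbe. simpl (2 * 2)%nat in Hbal, Hbbe. fold K in Hbal, Hbbe.
      assert (Hp : forall x, 0 < x -> 0 < m / (2 * x ^ 2)) by (intros; apply Rdiv_lt_0_compat; [lra| apply Rmult_lt_0_compat; [lra|apply pow_lt; lra]]).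
      unfold Qa.
      destruct (Rle_or_lt (m / (2 * alpha ^ 2)) (m / (2 * beta ^ 2))).
      - destruct (Q_comp (2 * l / m) (Rabs theta) K _ _ Hc (Rabs_pos theta) HK (Hp alpha Hal) H Hbal) as [X _]; exact X.
      - destruct (Q_comp (2 * l / m) (Rabs theta) K _ _ Hc (Rabs_pos theta) HK (Hp beta Hbe) (Rlt_le _ _ H) Hbbe) as [_ X]; exact X. }
    assert (Hm3 : m / alpha ^ 3 <= C0 ^ 6 * (m / beta ^ 3)).
    { apply div_le_k. apply pow_lt; lra. apply pow_lt; lra.
      assert (beta ^ 3 <= (C0 ^ 2 * alpha) ^ 3) by (apply pow_incr; lra).
      rewrite Rpow_mult_distr, <- pow_mult in H. simpl (2 * 3)%nat in H. nra. }
    assert (0 < m / alpha ^ 3) by (apply Rdiv_lt_0_compat; [lra| apply pow_lt; lra]).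
    apply Rle_trans with ((K * MK K * Qa m theta l beta) * (C0 ^ 6 * (m / beta ^ 3))).
    apply Rmult_le_compat; lra. right; ring.
Qed.
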